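(* Let $n\ge 2$. With respect to the basis $(X,Y_1,\dots,Y_{n-1},Z_1,\dots,Z_{n-1},W)$ of $\mathfrak{ch}^n$ (block decomposition of sizes $1,\ 2n-2,\ 1$), the automorphism group of the Lie algebra $\mathfrak{ch}^n$ is $$\mathrm{Aut}(\mathfrak{ch}^n)=\left\{\begin{pmatrix}1&0&0\\ u&M&0\\ a&v^T&\lambda\end{pmatrix}\ :\ M\in GL(2n-2,\mathbb R),\ M^TJ_{n-1}M=\lambda J_{n-1},\ v\in\mathbb R^{2n-2},\ a,\lambda\in\mathbb R,\ \lambda\neq 0,\ u=\tfrac{1}{2\lambda}MJ_{n-1}v\right\}.$$
   Context: $\mathfrak{ch}^n$ is the $2n$-dimensional real Lie algebra with basis $X,Y_1,\dots,Y_{n-1},Z_1,\dots,Z_{n-1},W$ whose only nonzero brackets (up to antisymmetry) are $[X,Y_i]=\tfrac12 Y_i$, $[X,Z_i]=\tfrac12 Z_i$, $[X,W]=W$, $[Z_j,Y_i]=\delta_{ij}W$ for $i,j\in\{1,\dots,n-1\}$ (it is the Lie algebra of the solvable group $\mathbb R\ltimes H_{2n-1}$ acting simply transitively on complex hyperbolic space $\mathbb{CH}^n$). Linear maps are represented by matrices in this ordered basis (the $k$-th column is the coordinate vector of the image of the $k$-th basis vector). $J_{m}=\begin{pmatrix}0&I_m\\-I_m&0\end{pmatrix}$ with $I_m$ the $m\times m$ identity matrix. *)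

(* Defs.v *)
From HB Require Import structures.
From mathcomp Require Import all_boot all_order all_algebra.
From mathcomp Require Import reals.
Set Implicit Arguments. Unset Strict Implicit. Unset Printing Implicit Defensive.
Import Order.TTheory GRing.Theory Num.Theory.
Local Open Scope ring_scope.

(* ch^n with m = n-1: dimension 1 + (m + m) + 1 = 2n.
   Coordinates (column vectors) in the ordered basis
   X (index 0), Y_1..Y_m (indices 1..m), Z_1..Z_m (indices m+1..2m), W (index 2m+1). *)
Definition chdim (m : nat) : nat := (1 + (m + m)) + 1.

Section CH.
Variables (R : realType) (m : nat).
Local Notation N := (chdim m).

Definition isY (k : nat) : bool := (1 <= k <= m)%N.
Definition isZ (k : nat) : bool := (m + 1 <= k <= m + m)%N.
Definition isW (k : nat) : bool := (k == m + m + 1)%N.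

Definition ch_e (k : 'I_N) : 'cV[R]_N := delta_mx k 0.
Definition ch_W : 'I_N := inord (m + m + 1).

(* bracket of basis vectors, from the structure constants
   [X,Y_i]=1/2 Y_i, [X,Z_i]=1/2 Z_i, [X,W]=W, [Z_j,Y_i]=delta_ij W,
   extended by antisymmetry, all other brackets zero *)
Definition ch_bb (i j : 'I_N) : 'cV[R]_N :=
  if (i == 0 :> nat) && (isY j || isZ j) then (1/2) *: ch_e j
  else if (i == 0 :> nat) && isW j then ch_e j
  else if (j == 0 :> nat) && (isY i || isZ i) then - ((1/2) *: ch_e i)
  else if (j == 0 :> nat) && isW i then - ch_e i
  else if [&& isZ i, isY j & (nat_of_ord i == (nat_of_ord j + m)%N)] then ch_e ch_W
  else if [&& isY i, isZ j & (nat_of_ord j == (nat_of_ord i + m)%N)] then - ch_e ch_W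
  else 0.

Definition ch_br (p q : 'cV[R]_N) : 'cV[R]_N :=
  \sum_(i < N) \sum_(j < N) (p i 0 * q j 0) *: ch_bb i j.

(* A (k-th column = coordinates of image of k-th basis vector) is a Lie
   algebra automorphism *)
Definition ch_aut (A : 'M[R]_N) : Prop :=
  A \in unitmx /\ forall p q : 'cV[R]_N, A *m ch_br p q = ch_br (A *m p) (A *m q).

Definition Jmx : 'M[R]_(m + m) := block_mx 0 1%:M (- 1%:M) 0.

Definition ch_block (u : 'cV[R]_(m + m)) (M : 'M[R]_(m + m))
    (a : R) (v : 'cV[R]_(m + m)) (lam : R) : 'M[R]_N :=
  block_mx (block_mx (1%:M : 'M[R]_1) 0 u M) 0
           (row_mx (a%:M : 'M[R]_1) v^T) (lam%:M : 'M[R]_1).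
End CH.

(* Main.v *)
Require Import Defs.
From HB Require Import structures.
From mathcomp Require Import all_boot all_order all_algebra.
From mathcomp Require Import reals.
From mathcomp Require Import zify ring lra.
Import Order.TTheory GRing.Theory Num.Theory.
Local Open Scope ring_scope.
Set Implicit Arguments. Unset Strict Implicit. Unset Printing Implicit Defensive.

Definition iX m : 'I_(chdim m) := lshift 1 (lshift (m+m) (ord0 : 'I_1)).
Definition iY m (k : 'I_m) : 'I_(chdim m) := lshift 1 (rshift 1 (lshift m k)).
Definition iZ m (k : 'I_m) : 'I_(chdim m) := lshift 1 (rshift 1 (rshift m k)).
Definition iW m : 'I_(chdim m) := rshift (1 + (m+m)) (ord0 : 'I_1).

Lemma iXv m : nat_of_ord (iX m) = 0%N. Proof. by []. Qed.
Lemma iYv m k : nat_of_ord (@iY m k) = (1 + k)%N. Proof. by []. Qed.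
Lemma iZv m k : nat_of_ord (@iZ m k) = (1 + (m + k))%N. Proof. by []. Qed.
Lemma iWv m : nat_of_ord (iW m) = (1 + (m + m) + 0)%N. Proof. by []. Qed.

Lemma chW m : ch_W m = iW m.
Proof. have h : (m+m+1 < chdim m)%N by rewrite /chdim; lia.
apply: val_inj; rewrite [LHS]inordK //; rewrite /= /chdim; lia. Qed.

Ltac bbcase := rewrite /ch_bb ?chW /isY /isZ /isW ?iXv ?iYv ?iZv ?iWv;
  repeat (case: ifP => //; intros); try (exfalso; lia).


Definition cv (R : realType) m (x : R) (h : 'cV[R]_(m+m)) (w : R) : 'cV[R]_(chdim m) :=
  col_mx (col_mx x%:M h) w%:M.

Lemma sum_ch (V : zmodType) m (F : 'I_(chdim m) -> V) :
  \sum_i F i = F (iX m) + \sum_(k < m) F (iY k) + \sum_(k < m) F (iZ k) + F (iW m).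
Proof.
rewrite /chdim big_split_ord /= big_split_ord /= big_split_ord /= !big_ord1 !addrA.
by [].
Qed.

Lemma cvX (R : realType) m x h w : @cv R m x h w (iX m) 0 = x.
Proof. by rewrite /cv /iX !col_mxEu mxE. Qed.
Lemma cvY (R : realType) m x h w k : @cv R m x h w (iY k) 0 = h (lshift m k) 0.
Proof. by rewrite /cv /iY !col_mxEu col_mxEd. Qed.
Lemma cvZ (R : realType) m x h w k : @cv R m x h w (iZ k) 0 = h (rshift m k) 0.
Proof. by rewrite /cv /iZ !col_mxEu col_mxEd. Qed.
Lemma cvW (R : realType) m x h w : @cv R m x h w (iW m) 0 = w.
Proof. by rewrite /cv /iW col_mxEd mxE. Qed.

Lemma delta11 (R : realType) : delta_mx (ord0 : 'I_1) (ord0 : 'I_1) = (1 : R)%:M.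
Proof. by apply/matrixP => i j; rewrite !ord1 !mxE. Qed.

Lemma scal0 (R : realType) n : (0 : R)%:M = 0 :> 'M[R]_n.
Proof. by apply/matrixP => i j; rewrite !mxE mul0rn. Qed.

Lemma eX (R : realType) m : ch_e R (iX m) = cv 1 0 0.
Proof. by rewrite /ch_e /iX /cv !delta_mx_ushift delta11 scal0. Qed.
Lemma eY (R : realType) m k : ch_e R (@iY m k) = cv 0 (delta_mx (lshift m k) 0) 0.
Proof. by rewrite /ch_e /iY /cv !delta_mx_ushift delta_mx_dshift scal0 delta_mx_ushift. Qed.
Lemma eZ (R : realType) m k : ch_e R (@iZ m k) = cv 0 (delta_mx (rshift m k) 0) 0.
Proof. by rewrite /ch_e /iZ /cv !delta_mx_ushift delta_mx_dshift scal0 delta_mx_dshift. Qed.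
Lemma eW (R : realType) m : ch_e R (iW m) = cv 0 0 1.
Proof. by rewrite /ch_e /iW /cv delta_mx_dshift delta11 scal0 col_mx0. Qed.

Lemma cvD (R : realType) m x1 h1 w1 x2 h2 w2 :
  @cv R m x1 h1 w1 + cv x2 h2 w2 = cv (x1 + x2) (h1 + h2) (w1 + w2).
Proof. by rewrite /cv !add_col_mx !raddfD. Qed.
Lemma cvZs (R : realType) m c x h w : c *: @cv R m x h w = cv (c * x) (c *: h) (c * w).
Proof. by rewrite /cv !scale_col_mx !scale_scalar_mx. Qed.
Lemma cvN (R : realType) m x h w : - @cv R m x h w = cv (- x) (- h) (- w).
Proof. by rewrite -scaleN1r cvZs !mulN1r scaleN1r. Qed.
Lemma cv0 (R : realType) m : @cv R m 0 0 0 = 0.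
Proof. by rewrite /cv scal0 !col_mx0. Qed.
Lemma cv_sum (R : realType) m I (r : seq I) (P : pred I) x h w :
  \sum_(i <- r | P i) @cv R m (x i) (h i) (w i) =
  cv (\sum_(i <- r | P i) x i) (\sum_(i <- r | P i) h i) (\sum_(i <- r | P i) w i).
Proof.
elim: r => [|a r IH]; first by rewrite !big_nil cv0.
by rewrite !big_cons; case: (P a); rewrite ?IH ?cvD.
Qed.

Lemma GXX (R : realType) m x1 h1 w1 x2 h2 w2  :
  (@cv R m x1 h1 w1 (iX m) 0 * @cv R m x2 h2 w2 (iX m) 0) *: ch_bb R (iX m) (iX m) = 0.
Proof.
have -> : ch_bb R (iX m) (iX m) = 0 by bbcase.
by rewrite ?cvX ?cvY ?cvZ ?cvW ?eX ?eY ?eZ ?eW ?scaler0 ?scalerN ?scaleNr ?scalerA ?cvZs ?cvN ?mulr0 ?mulr1 ?oppr0 ?cv0 ?mul1r ?scaleNr ?scaler0 ?oppr0 ?cv0.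
Qed.
Lemma GXY (R : realType) m x1 h1 w1 x2 h2 w2 l :
  (@cv R m x1 h1 w1 (iX m) 0 * @cv R m x2 h2 w2 (iY l) 0) *: ch_bb R (iX m) (iY l) = cv 0 ((x1 * h2 (lshift m l) 0 * (1/2)) *: delta_mx (lshift m l) 0) 0.
Proof.
have hl := ltn_ord l.
have -> : ch_bb R (iX m) (iY l) = (1/2) *: ch_e R (iY l) by bbcase.
by rewrite ?cvX ?cvY ?cvZ ?cvW ?eX ?eY ?eZ ?eW ?scaler0 ?scalerN ?scaleNr ?scalerA ?cvZs ?cvN ?mulr0 ?mulr1 ?oppr0 ?cv0 ?mul1r ?scaleNr ?scaler0 ?oppr0 ?cv0.
Qed.
Lemma GXZ (R : realType) m x1 h1 w1 x2 h2 w2 l :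
  (@cv R m x1 h1 w1 (iX m) 0 * @cv R m x2 h2 w2 (iZ l) 0) *: ch_bb R (iX m) (iZ l) = cv 0 ((x1 * h2 (rshift m l) 0 * (1/2)) *: delta_mx (rshift m l) 0) 0.
Proof.
have hl := ltn_ord l.
have -> : ch_bb R (iX m) (iZ l) = (1/2) *: ch_e R (iZ l) by bbcase.
by rewrite ?cvX ?cvY ?cvZ ?cvW ?eX ?eY ?eZ ?eW ?scaler0 ?scalerN ?scaleNr ?scalerA ?cvZs ?cvN ?mulr0 ?mulr1 ?oppr0 ?cv0 ?mul1r ?scaleNr ?scaler0 ?oppr0 ?cv0.
Qed.
Lemma GXW (R : realType) m x1 h1 w1 x2 h2 w2  :
  (@cv R m x1 h1 w1 (iX m) 0 * @cv R m x2 h2 w2 (iW m) 0) *: ch_bb R (iX m) (iW m) = cv 0 0 (x1 * w2).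
Proof.
have -> : ch_bb R (iX m) (iW m) = ch_e R (iW m) by bbcase.
by rewrite ?cvX ?cvY ?cvZ ?cvW ?eX ?eY ?eZ ?eW ?scaler0 ?scalerN ?scaleNr ?scalerA ?cvZs ?cvN ?mulr0 ?mulr1 ?oppr0 ?cv0 ?mul1r ?scaleNr ?scaler0 ?oppr0 ?cv0.
Qed.
Lemma GYX (R : realType) m x1 h1 w1 x2 h2 w2 k :
  (@cv R m x1 h1 w1 (iY k) 0 * @cv R m x2 h2 w2 (iX m) 0) *: ch_bb R (iY k) (iX m) = cv 0 (- ((h1 (lshift m k) 0 * x2 * (1/2)) *: delta_mx (lshift m k) 0)) 0.
Proof.
have hk := ltn_ord k.
have -> : ch_bb R (iY k) (iX m) = - ((1/2) *: ch_e R (iY k)) by bbcase.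
by rewrite ?cvX ?cvY ?cvZ ?cvW ?eX ?eY ?eZ ?eW ?scaler0 ?scalerN ?scaleNr ?scalerA ?cvZs ?cvN ?mulr0 ?mulr1 ?oppr0 ?cv0 ?mul1r ?scaleNr ?scaler0 ?oppr0 ?cv0.
Qed.
Lemma GYW (R : realType) m x1 h1 w1 x2 h2 w2 k :
  (@cv R m x1 h1 w1 (iY k) 0 * @cv R m x2 h2 w2 (iW m) 0) *: ch_bb R (iY k) (iW m) = 0.
Proof.
have hk := ltn_ord k.
have -> : ch_bb R (iY k) (iW m) = 0 by bbcase.
by rewrite ?cvX ?cvY ?cvZ ?cvW ?eX ?eY ?eZ ?eW ?scaler0 ?scalerN ?scaleNr ?scalerA ?cvZs ?cvN ?mulr0 ?mulr1 ?oppr0 ?cv0 ?mul1r ?scaleNr ?scaler0 ?oppr0 ?cv0.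
Qed.
Lemma GZX (R : realType) m x1 h1 w1 x2 h2 w2 k :
  (@cv R m x1 h1 w1 (iZ k) 0 * @cv R m x2 h2 w2 (iX m) 0) *: ch_bb R (iZ k) (iX m) = cv 0 (- ((h1 (rshift m k) 0 * x2 * (1/2)) *: delta_mx (rshift m k) 0)) 0.
Proof.
have hk := ltn_ord k.
have -> : ch_bb R (iZ k) (iX m) = - ((1/2) *: ch_e R (iZ k)) by bbcase.
by rewrite ?cvX ?cvY ?cvZ ?cvW ?eX ?eY ?eZ ?eW ?scaler0 ?scalerN ?scaleNr ?scalerA ?cvZs ?cvN ?mulr0 ?mulr1 ?oppr0 ?cv0 ?mul1r ?scaleNr ?scaler0 ?oppr0 ?cv0.
Qed.
Lemma GZW (R : realType) m x1 h1 w1 x2 h2 w2 k :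
  (@cv R m x1 h1 w1 (iZ k) 0 * @cv R m x2 h2 w2 (iW m) 0) *: ch_bb R (iZ k) (iW m) = 0.
Proof.
have hk := ltn_ord k.
have -> : ch_bb R (iZ k) (iW m) = 0 by bbcase.
by rewrite ?cvX ?cvY ?cvZ ?cvW ?eX ?eY ?eZ ?eW ?scaler0 ?scalerN ?scaleNr ?scalerA ?cvZs ?cvN ?mulr0 ?mulr1 ?oppr0 ?cv0 ?mul1r ?scaleNr ?scaler0 ?oppr0 ?cv0.
Qed.
Lemma GWX (R : realType) m x1 h1 w1 x2 h2 w2  :
  (@cv R m x1 h1 w1 (iW m) 0 * @cv R m x2 h2 w2 (iX m) 0) *: ch_bb R (iW m) (iX m) = cv 0 0 (- (w1 * x2)).
Proof.
have -> : ch_bb R (iW m) (iX m) = - ch_e R (iW m) by bbcase.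
by rewrite ?cvX ?cvY ?cvZ ?cvW ?eX ?eY ?eZ ?eW ?scaler0 ?scalerN ?scaleNr ?scalerA ?cvZs ?cvN ?mulr0 ?mulr1 ?oppr0 ?cv0 ?mul1r ?scaleNr ?scaler0 ?oppr0 ?cv0.
Qed.
Lemma GWY (R : realType) m x1 h1 w1 x2 h2 w2 l :
  (@cv R m x1 h1 w1 (iW m) 0 * @cv R m x2 h2 w2 (iY l) 0) *: ch_bb R (iW m) (iY l) = 0.
Proof.
have hl := ltn_ord l.
have -> : ch_bb R (iW m) (iY l) = 0 by bbcase.
by rewrite ?cvX ?cvY ?cvZ ?cvW ?eX ?eY ?eZ ?eW ?scaler0 ?scalerN ?scaleNr ?scalerA ?cvZs ?cvN ?mulr0 ?mulr1 ?oppr0 ?cv0 ?mul1r ?scaleNr ?scaler0 ?oppr0 ?cv0.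
Qed.
Lemma GWZ (R : realType) m x1 h1 w1 x2 h2 w2 l :
  (@cv R m x1 h1 w1 (iW m) 0 * @cv R m x2 h2 w2 (iZ l) 0) *: ch_bb R (iW m) (iZ l) = 0.
Proof.
have hl := ltn_ord l.
have -> : ch_bb R (iW m) (iZ l) = 0 by bbcase.
by rewrite ?cvX ?cvY ?cvZ ?cvW ?eX ?eY ?eZ ?eW ?scaler0 ?scalerN ?scaleNr ?scalerA ?cvZs ?cvN ?mulr0 ?mulr1 ?oppr0 ?cv0 ?mul1r ?scaleNr ?scaler0 ?oppr0 ?cv0.
Qed.
Lemma GWW (R : realType) m x1 h1 w1 x2 h2 w2  :
  (@cv R m x1 h1 w1 (iW m) 0 * @cv R m x2 h2 w2 (iW m) 0) *: ch_bb R (iW m) (iW m) = 0.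
Proof.
have -> : ch_bb R (iW m) (iW m) = 0 by bbcase.
by rewrite ?cvX ?cvY ?cvZ ?cvW ?eX ?eY ?eZ ?eW ?scaler0 ?scalerN ?scaleNr ?scalerA ?cvZs ?cvN ?mulr0 ?mulr1 ?oppr0 ?cv0 ?mul1r ?scaleNr ?scaler0 ?oppr0 ?cv0.
Qed.
Lemma GYY (R : realType) m x1 h1 w1 x2 h2 w2 k l :
  (@cv R m x1 h1 w1 (iY k) 0 * @cv R m x2 h2 w2 (iY l) 0) *: ch_bb R (iY k) (iY l) = 0.
Proof.
have hk := ltn_ord k.
have hl := ltn_ord l.
have -> : ch_bb R (iY k) (iY l) = 0 by bbcase.
by rewrite ?cvX ?cvY ?cvZ ?cvW ?eX ?eY ?eZ ?eW ?scaler0 ?scalerN ?scaleNr ?scalerA ?cvZs ?cvN ?mulr0 ?mulr1 ?oppr0 ?cv0 ?mul1r ?scaleNr ?scaler0 ?oppr0 ?cv0.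
Qed.
Lemma GZZ (R : realType) m x1 h1 w1 x2 h2 w2 k l :
  (@cv R m x1 h1 w1 (iZ k) 0 * @cv R m x2 h2 w2 (iZ l) 0) *: ch_bb R (iZ k) (iZ l) = 0.
Proof.
have hk := ltn_ord k.
have hl := ltn_ord l.
have -> : ch_bb R (iZ k) (iZ l) = 0 by bbcase.
by rewrite ?cvX ?cvY ?cvZ ?cvW ?eX ?eY ?eZ ?eW ?scaler0 ?scalerN ?scaleNr ?scalerA ?cvZs ?cvN ?mulr0 ?mulr1 ?oppr0 ?cv0 ?mul1r ?scaleNr ?scaler0 ?oppr0 ?cv0.
Qed.

Lemma GYZ (R : realType) m x1 h1 w1 x2 h2 w2 k l :
  (@cv R m x1 h1 w1 (iY k) 0 * @cv R m x2 h2 w2 (iZ l) 0) *: ch_bb R (iY k) (iZ l) =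
  cv 0 0 (if k == l then - (h1 (lshift m k) 0 * h2 (rshift m l) 0) else 0).
Proof.
have hk := ltn_ord k; have hl := ltn_ord l.
have -> : ch_bb R (iY k) (iZ l) = if k == l then - ch_e R (iW m) else 0.
  case: (eqVneq k l) => [<-|nkl]; last have nkl' : (k : nat) != l by [].
    by bbcase.
  by bbcase.
rewrite cvY cvZ; case: eqP => _; last by rewrite scaler0 cv0.
by rewrite eW scalerN cvZs cvN !mulr0 oppr0 scaler0 oppr0 mulr1.
Qed.

Lemma GZY (R : realType) m x1 h1 w1 x2 h2 w2 k l :
  (@cv R m x1 h1 w1 (iZ k) 0 * @cv R m x2 h2 w2 (iY l) 0) *: ch_bb R (iZ k) (iY l) =
  cv 0 0 (if k == l then h1 (rshift m k) 0 * h2 (lshift m l) 0 else 0).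
Proof.
have hk := ltn_ord k; have hl := ltn_ord l.
have -> : ch_bb R (iZ k) (iY l) = if k == l then ch_e R (iW m) else 0.
  case: (eqVneq k l) => [<-|nkl]; last have nkl' : (k : nat) != l by [].
    by bbcase.
  by bbcase.
rewrite cvY cvZ; case: eqP => _; last by rewrite scaler0 cv0.
by rewrite eW cvZs !mulr0 scaler0 mulr1.
Qed.

Lemma sum_ch2 (V : zmodType) m (G : 'I_(chdim m) -> 'I_(chdim m) -> V)
  {gXX gXY gXZ gXW gYX gYY gYZ gYW gZX gZY gZZ gZW gWX gWY gWZ gWW}
  (hXX : G (iX m) (iX m) = gXX) (hXY : forall l, G (iX m) (iY l) = gXY l)
  (hXZ : forall l, G (iX m) (iZ l) = gXZ l) (hXW : G (iX m) (iW m) = gXW)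
  (hYX : forall k, G (iY k) (iX m) = gYX k) (hYY : forall k, \sum_l G (iY k) (iY l) = gYY k)
  (hYZ : forall k, \sum_l G (iY k) (iZ l) = gYZ k) (hYW : forall k, G (iY k) (iW m) = gYW k)
  (hZX : forall k, G (iZ k) (iX m) = gZX k) (hZY : forall k, \sum_l G (iZ k) (iY l) = gZY k)
  (hZZ : forall k, \sum_l G (iZ k) (iZ l) = gZZ k) (hZW : forall k, G (iZ k) (iW m) = gZW k)
  (hWX : G (iW m) (iX m) = gWX) (hWY : forall l, G (iW m) (iY l) = gWY l)
  (hWZ : forall l, G (iW m) (iZ l) = gWZ l) (hWW : G (iW m) (iW m) = gWW) :
  \sum_i \sum_j G i j =
    (gXX + \sum_l gXY l + \sum_l gXZ l + gXW)
  + (\sum_k gYX k + \sum_k gYY k + \sum_k gYZ k + \sum_k gYW k)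
  + (\sum_k gZX k + \sum_k gZY k + \sum_k gZZ k + \sum_k gZW k)
  + (gWX + \sum_l gWY l + \sum_l gWZ l + gWW).
Proof.
rewrite sum_ch !sum_ch.
congr (_ + _ + _ + _).
- by rewrite hXX hXW (eq_bigr _ (fun l _ => hXY l)) (eq_bigr _ (fun l _ => hXZ l)).
- rewrite -(eq_bigr _ (fun k _ => hYX k)) -(eq_bigr _ (fun k _ => hYY k)).
  rewrite -(eq_bigr _ (fun k _ => hYZ k)) -(eq_bigr _ (fun k _ => hYW k)) -!big_split.
  by apply: eq_bigr => k _; rewrite sum_ch.
- rewrite -(eq_bigr _ (fun k _ => hZX k)) -(eq_bigr _ (fun k _ => hZY k)).
  rewrite -(eq_bigr _ (fun k _ => hZZ k)) -(eq_bigr _ (fun k _ => hZW k)) -!big_split.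
  by apply: eq_bigr => k _; rewrite sum_ch.
- by rewrite hWX hWW (eq_bigr _ (fun l _ => hWY l)) (eq_bigr _ (fun l _ => hWZ l)).
Qed.

Lemma sum_if (R : realType) m (k : 'I_m) (F : 'I_m -> R) :
  \sum_(l < m) (if k == l then F l else 0) = F k.
Proof.
rewrite (bigD1 k) //= eqxx big1 ?addr0 // => l /negbTE nlk.
by rewrite eq_sym nlk.
Qed.

Lemma hexp (R : realType) m (c : R) (h : 'cV[R]_(m + m)) :
  c *: h = \sum_l (c * h (lshift m l) 0) *: delta_mx (lshift m l) 0
         + \sum_l (c * h (rshift m l) 0) *: delta_mx (rshift m l) 0.
Proof.
rewrite {1}(matrix_sum_delta h) big_split_ord /= scalerDr !scaler_sumr.
by congr (_ + _); apply: eq_bigr => l _; rewrite big_ord1 scalerA.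
Qed.

Definition om (R : realType) m (h1 h2 : 'cV[R]_(m + m)) : R := (h1^T *m Jmx R m *m h2) 0 0.

Lemma om_exp (R : realType) m (h1 h2 : 'cV[R]_(m + m)) :
  om h1 h2 = \sum_k h1 (lshift m k) 0 * h2 (rshift m k) 0 - \sum_k h1 (rshift m k) 0 * h2 (lshift m k) 0.
Proof.
rewrite /om -(vsubmxK h1) -(vsubmxK h2) tr_col_mx /Jmx mul_row_block !mulmx0 !add0r addr0.
rewrite mul_row_col mulmx1 mulmxN mulNmx mulmx1 [LHS]mxE [X in X + _]mxE addrC.
under eq_bigr do rewrite !col_mxEu !col_mxEd.
under [X in _ = _ - X]eq_bigr do rewrite !col_mxEu !col_mxEd.
by congr (_ - _); rewrite mxE; apply: eq_bigr => k _; rewrite !mxE.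
Qed.

Lemma br_cv (R : realType) m x1 h1 w1 x2 h2 w2 :
  ch_br (@cv R m x1 h1 w1) (cv x2 h2 w2) =
  cv 0 ((1/2) *: (x1 *: h2 - x2 *: h1)) (x1 * w2 - x2 * w1 - om h1 h2).
Proof.
rewrite /ch_br.
have hYY k : \sum_l (@cv R m x1 h1 w1 (iY k) 0 * @cv R m x2 h2 w2 (iY l) 0) *: ch_bb R (iY k) (iY l) = 0.
  by rewrite big1 // => l _; apply: GYY.
have hZZ k : \sum_l (@cv R m x1 h1 w1 (iZ k) 0 * @cv R m x2 h2 w2 (iZ l) 0) *: ch_bb R (iZ k) (iZ l) = 0.
  by rewrite big1 // => l _; apply: GZZ.
have hYZ k : \sum_l (@cv R m x1 h1 w1 (iY k) 0 * @cv R m x2 h2 w2 (iZ l) 0) *: ch_bb R (iY k) (iZ l)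
   = cv 0 0 (- (h1 (lshift m k) 0 * h2 (rshift m k) 0)).
  by rewrite (eq_bigr _ (fun l _ => GYZ x1 h1 w1 x2 h2 w2 k l)) cv_sum !big1_eq sum_if.
have hZY k : \sum_l (@cv R m x1 h1 w1 (iZ k) 0 * @cv R m x2 h2 w2 (iY l) 0) *: ch_bb R (iZ k) (iY l)
   = cv 0 0 (h1 (rshift m k) 0 * h2 (lshift m k) 0).
  by rewrite (eq_bigr _ (fun l _ => GZY x1 h1 w1 x2 h2 w2 k l)) cv_sum !big1_eq sum_if.
rewrite (sum_ch2 (GXX x1 h1 w1 x2 h2 w2) (GXY x1 h1 w1 x2 h2 w2) (GXZ x1 h1 w1 x2 h2 w2)
  (GXW x1 h1 w1 x2 h2 w2) (GYX x1 h1 w1 x2 h2 w2) hYY hYZ (GYW x1 h1 w1 x2 h2 w2)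
  (GZX x1 h1 w1 x2 h2 w2) hZY hZZ (GZW x1 h1 w1 x2 h2 w2)
  (GWX x1 h1 w1 x2 h2 w2) (GWY x1 h1 w1 x2 h2 w2) (GWZ x1 h1 w1 x2 h2 w2) (GWW x1 h1 w1 x2 h2 w2)).
rewrite !big1_eq !cv_sum !big1_eq !addr0 !add0r !cvD.
rewrite !addr0 !add0r; congr cv.
- rewrite !sumrN scalerBr !scalerA !hexp opprD !addrA.
  by congr (_ + _ - _ - _); apply: eq_bigr => i _; congr (_ *: _); ring.
- rewrite om_exp sumrN; ring.
Qed.

Definition A9 (R : realType) m (al : R) (r : 'rV[R]_(m+m)) (be : R) (u : 'cV[R]_(m+m))
  (M : 'M[R]_(m+m)) (c : 'cV[R]_(m+m)) (a : R) (s : 'rV[R]_(m+m)) (ga : R) : 'M[R]_(chdim m) :=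
  block_mx (block_mx al%:M r u M) (col_mx be%:M c) (row_mx a%:M s) ga%:M.

Lemma A9_decomp (R : realType) m (A : 'M[R]_(chdim m)) :
  exists al r be u M c a s ga, A = @A9 R m al r be u M c a s ga.
Proof.
set A' : 'M[R]_((1 + (m + m)) + 1) := A.
rewrite -(submxK A') -(submxK (ulsubmx A')) -(vsubmxK (ursubmx A')) -(hsubmxK (dlsubmx A')).
rewrite [ulsubmx (ulsubmx A')]mx11_scalar [usubmx (ursubmx A')]mx11_scalar.
rewrite [lsubmx (dlsubmx A')]mx11_scalar [drsubmx A']mx11_scalar.
by do 9 eexists.
Qed.

Lemma m11 (R : realType) (B : 'M[R]_1) : B = (B 0 0)%:M.
Proof. exact: mx11_scalar. Qed.

Lemma sc00 (R : realType) (c : R) : (c%:M : 'M[R]_1) 0 0 = c.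
Proof. by rewrite mxE. Qed.

Lemma A9_mul (R : realType) m al r be u M c a s ga x h w :
  @A9 R m al r be u M c a s ga *m cv x h w =
  cv (al * x + (r *m h) 0 0 + be * w) (x *: u + M *m h + w *: c) (a * x + (s *m h) 0 0 + ga * w).
Proof.
rewrite /A9 /cv mul_block_col mul_block_col mul_row_col !mul_mx_scalar.
rewrite scale_col_mx add_col_mx !scale_scalar_mx [r *m h]m11 [s *m h]m11 -!raddfD /=.
by congr (col_mx (col_mx (_%:M) _) (_%:M)); rewrite sc00; ring.
Qed.

Lemma cv_inj (R : realType) m x h w x' h' w' :
  @cv R m x h w = cv x' h' w' -> [/\ x = x', h = h' & w = w'].
Proof.
rewrite /cv => /eq_col_mx [/eq_col_mx [e1 e2] e3]; split => //.
  by have := congr1 (fun B : 'M[R]_1 => B 0 0) e1; rewrite !mxE.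
by have := congr1 (fun B : 'M[R]_1 => B 0 0) e3; rewrite !mxE.
Qed.

Lemma cv_surj (R : realType) m (p : 'cV[R]_(chdim m)) : exists x h w, p = @cv R m x h w.
Proof.
set p' : 'cV[R]_((1 + (m + m)) + 1) := p.
rewrite -(vsubmxK p') -(vsubmxK (usubmx p')) [usubmx (usubmx p')]m11 [dsubmx p']m11.
by do 3 eexists.
Qed.

Lemma JJ (R : realType) m : Jmx R m *m Jmx R m = - 1%:M.
Proof.
rewrite /Jmx mulmx_block !mulmx0 !mul0mx !addr0 !add0r mulmx1 mulmxN mulmx1 [in RHS]scalar_mx_block.
by rewrite opp_block_mx oppr0.
Qed.

Lemma Jtr (R : realType) m : (Jmx R m)^T = - Jmx R m.
Proof. by rewrite /Jmx tr_block_mx !trmx0 trmx1 linearN /= trmx1 opp_block_mx !oppr0 opprK. Qed.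

Lemma om_entry (R : realType) n (X : 'M[R]_n) i j :
  ((delta_mx i (0 : 'I_1))^T *m X *m delta_mx j (0 : 'I_1)) 0 0 = X i j.
Proof. by rewrite trmx_delta -rowE -colE !mxE. Qed.

Lemma omDl (R : realType) m (p1 p2 q : 'cV[R]_(m + m)) : om (p1 + p2) q = om p1 q + om p2 q.
Proof. by rewrite /om linearD /= !mulmxDl mxE. Qed.
Lemma omDr (R : realType) m (p q1 q2 : 'cV[R]_(m + m)) : om p (q1 + q2) = om p q1 + om p q2.
Proof. by rewrite /om !mulmxDr mxE. Qed.
Lemma omZl (R : realType) m c (p q : 'cV[R]_(m + m)) : om (c *: p) q = c * om p q.
Proof. by rewrite /om linearZ /= -!scalemxAl mxE. Qed.
Lemma omZr (R : realType) m c (p q : 'cV[R]_(m + m)) : om p (c *: q) = c * om p q.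
Proof. by rewrite /om -!scalemxAr mxE. Qed.
Lemma om0l (R : realType) m (q : 'cV[R]_(m + m)) : om 0 q = 0.
Proof. by rewrite /om trmx0 !mul0mx mxE. Qed.
Lemma om0r (R : realType) m (p : 'cV[R]_(m + m)) : om p 0 = 0.
Proof. by rewrite /om mulmx0 mxE. Qed.
Lemma tr00 (R : realType) (B : 'M[R]_1) : B^T 0 0 = B 0 0.
Proof. by rewrite mxE. Qed.

Lemma om_anti (R : realType) m (p q : 'cV[R]_(m + m)) : om p q = - om q p.
Proof.
rewrite /om -(tr00 (p^T *m Jmx R m *m q)) !trmx_mul trmxK Jtr mulmxA mulmxN mulNmx.
by rewrite [in LHS]mxE.
Qed.

Lemma om_self (R : realType) m (p : 'cV[R]_(m + m)) : om p p = 0.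
Proof. have := om_anti p p; lra. Qed.

Lemma omM (R : realType) m (M : 'M[R]_(m + m)) p q :
  om (M *m p) (M *m q) = (p^T *m (M^T *m Jmx R m *m M) *m q) 0 0.
Proof. by rewrite /om trmx_mul !mulmxA. Qed.

Lemma om_delta (R : realType) m (i j : 'I_(m + m)) :
  om (delta_mx i 0) (delta_mx j 0) = Jmx R m i j.
Proof. exact: om_entry. Qed.

Lemma z00 (R : realType) p q (i : 'I_p) (j : 'I_q) : (0 : 'M[R]_(p, q)) i j = 0.
Proof. by rewrite mxE. Qed.

Lemma mul_delta00 (R : realType) n (X : 'M[R]_(1, n)) j : (X *m delta_mx j (0 : 'I_1)) 0 0 = X 0 j.
Proof. by rewrite -colE mxE. Qed.

Lemma chb (R : realType) m u M a v lam :
  @ch_block R m u M a v lam = A9 1 0 0 u M 0 a v^T lam.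
Proof. by rewrite /ch_block /A9 scal0 col_mx0. Qed.

Ltac simp := rewrite ?(mulr0, mul0r, mulr1, mul1r, addr0, add0r, subr0, sub0r, mulmx0, mul0mx,
  scale0r, scaler0, scale1r, om0l, om0r, subrr, z00, oppr0, scalerN, scaleNr).

Lemma fwd (R : realType) m (hm : (0 < m)%N) (A : 'M[R]_(chdim m)) :
  ch_aut A ->
  exists (M : 'M[R]_(m + m)) (v : 'cV[R]_(m + m)) (a lam : R),
    [/\ M \in unitmx, M^T *m Jmx R m *m M = lam *: Jmx R m, lam != 0 &
        A = ch_block (((2 * lam)^-1) *: (M *m Jmx R m *m v)) M a v lam].
Proof.
case=> uA hom.
have [al [r [be [u [M [c [a [s [ga eA]]]]]]]]] := A9_decomp A.
subst A.
have := hom (cv 1 0 0) (cv 0 0 1); rewrite !(br_cv, A9_mul); simp.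
case/cv_inj => hbe hc hga; subst be.
have hr : r = 0.
  apply/rowP => k; have := hom (cv 1 0 0) (cv 0 (delta_mx k 0) 0).
  rewrite !(br_cv, A9_mul); simp; case/cv_inj => h1 _ _.
  move: h1; rewrite -scalemxAr mxE mul_delta00; lra.
subst r.
have key i j : (- Jmx R m i j) *: c = 0 /\ ga * - Jmx R m i j = - (M^T *m Jmx R m *m M) i j.
  have := hom (cv 0 (delta_mx i 0) 0) (cv 0 (delta_mx j 0) 0).
  rewrite !(br_cv, A9_mul); simp.
  by rewrite omM om_entry om_delta; case/cv_inj.
have hJ : M^T *m Jmx R m *m M = ga *: Jmx R m.
  apply/matrixP => i j; rewrite [RHS]mxE; have [_] := key i j.
  by rewrite mulrN => /oppr_inj ->.
have i0 : 'I_m := Ordinal hm.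
have hc0 : c = 0.
  have [h _] := key (lshift m i0) (rshift m i0).
  by move: h; rewrite /Jmx block_mxEur mxE eqxx mulr1n scaleN1r => /eqP; rewrite oppr_eq0 => /eqP.
subst c; simp.
move: hga; simp => hga.
have hga0 : ga != 0.
  apply/eqP => g0; subst ga.
  have := A9_mul al 0 0 u M 0 a s 0 0 0 1; simp; rewrite cv0 => h0.
  have := mulKmx uA (cv 0 0 1); rewrite h0 mulmx0 -(cv0 R m) => /esym /cv_inj [_ _ /eqP].
  by rewrite oner_eq0.
have hal : al = 1.
  by apply: (mulIf hga0); rewrite mul1r -hga.
subst al.
have hu : u^T *m Jmx R m *m M = 2^-1 *: s.
  apply/rowP => j; have := hom (cv 1 0 0) (cv 0 (delta_mx j 0) 0).
  rewrite !(br_cv, A9_mul); simp; case/cv_inj => _ _.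
  rewrite -scalemxAr mxE mul_delta00 /om mulmxA mul_delta00 => h; rewrite [RHS]mxE; lra.
have hP : M^T *m Jmx R m *m (M *m Jmx R m) = - ga%:M.
  by rewrite mulmxA hJ -scalemxAl JJ scalerN scale_scalar_mx mulr1.
have hPQ : (- ga^-1) *: (M^T *m Jmx R m) *m (M *m Jmx R m) = 1%:M.
  by rewrite -scalemxAl hP scalerN scaleNr opprK scale_scalar_mx mulVf.
have hPQ' : (M^T *m Jmx R m) *m ((- ga^-1) *: (M *m Jmx R m)) = 1%:M.
  by rewrite -scalemxAr scalemxAl.
have [_ uMJ] := mulmx1_unit hPQ.
have [uP _] := mulmx1_unit hPQ'.
have uM : M \in unitmx by move: uMJ; rewrite unitmx_mul => /andP[].
exists M, s^T, a, ga; split => //.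
rewrite chb trmxK; congr A9.
apply: (can_inj (mulKmx uP)).
have := congr1 trmx hu; rewrite !trmx_mul trmxK Jtr linearZ /= mulNmx mulmxN mulmxA => h.
rewrite -scalemxAr [X in _ *: X]mulmxA hP mulNmx mul_scalar_mx.
rewrite scalerN scalerA -(opprK (_ *m u)) h.
by have -> : (2 * ga)^-1 * ga = 2^-1 by field.
Qed.

Lemma lin00 (R : realType) n (X : 'rV[R]_n) c1 c2 (h2 h1 : 'cV[R]_n) :
  (X *m (c1 *: h2 - c2 *: h1)) 0 0 = c1 * (X *m h2) 0 0 - c2 * (X *m h1) 0 0.
Proof. rewrite mulmxBr -!scalemxAr; move: (X *m h2) (X *m h1) => P Q; by rewrite !mxE. Qed.

Lemma sce (R : realType) (c : R) (B : 'M[R]_1) : (c *: B) 0 0 = c * B 0 0.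
Proof. by rewrite mxE. Qed.

Lemma omu (R : realType) m (M : 'M[R]_(m + m)) v lam h :
  M^T *m Jmx R m *m M = lam *: Jmx R m -> lam != 0 ->
  om ((2 * lam)^-1 *: (M *m Jmx R m *m v)) (M *m h) = 2^-1 * (v^T *m h) 0 0.
Proof.
move=> hJ hl; rewrite omZl -mulmxA omM hJ trmx_mul Jtr.
rewrite mulmxN mulNmx -scalemxAr mulNmx -scalemxAl -(mulmxA v^T) JJ mulmxN mulmx1.
by rewrite mulNmx scalerN opprK sce; field.
Qed.

Lemma omu2 (R : realType) m (M : 'M[R]_(m + m)) v lam h :
  M^T *m Jmx R m *m M = lam *: Jmx R m ->
  om (M *m Jmx R m *m v) (M *m h) = lam * (v^T *m h) 0 0.
Proof.
move=> hJ; rewrite -mulmxA omM hJ trmx_mul Jtr.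
rewrite mulmxN mulNmx -scalemxAr mulNmx -scalemxAl -(mulmxA v^T) JJ mulmxN mulmx1.
by rewrite mulNmx scalerN opprK sce.
Qed.

Lemma omMM (R : realType) m (M : 'M[R]_(m + m)) lam h1 h2 :
  M^T *m Jmx R m *m M = lam *: Jmx R m ->
  om (M *m h1) (M *m h2) = lam * om h1 h2.
Proof. by move=> hJ; rewrite omM hJ -scalemxAr -scalemxAl sce. Qed.

Lemma bwd (R : realType) m (M : 'M[R]_(m + m)) v a lam :
  M \in unitmx -> M^T *m Jmx R m *m M = lam *: Jmx R m -> lam != 0 ->
  ch_aut (ch_block (((2 * lam)^-1) *: (M *m Jmx R m *m v)) M a v lam).
Proof.
move=> uM hJ hl; rewrite chb; set u := _ *: _.
split.
  rewrite /A9 scal0 col_mx0 unitmxE det_lblock det_lblock !det_scalar1 mul1r unitfE mulf_neq0 //.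
  by move: uM; rewrite unitmxE unitfE.
move=> p q.
have [x1 [h1 [w1 ->]]] := cv_surj p.
have [x2 [h2 [w2 ->]]] := cv_surj q.
rewrite !(br_cv, A9_mul); simp.
congr cv.
  rewrite -scalemxAr mulmxBr -!scalemxAr; congr (_ *: _).
  by rewrite !scalerDr !scalerA [x2 * x1]mulrC opprD addrACA subrr add0r.
rewrite -scalemxAr sce lin00 !omDl !omDr !omZl !omZr om_self (om_anti (M *m h1)).
by rewrite !(omu2 _ _ hJ) (omMM _ _ hJ); field.
Qed.

Unset Implicit Arguments.

Theorem lemma2p1 (R : realType) (n : nat) (hn : (2 <= n)%N)
    (A : 'M[R]_(chdim n.-1)) :
  ch_aut A <->
  exists (M : 'M[R]_(n.-1 + n.-1)) (v : 'cV[R]_(n.-1 + n.-1)) (a lam : R),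
    [/\ M \in unitmx,
        M^T *m Jmx R n.-1 *m M = lam *: Jmx R n.-1,
        lam != 0 &
        A = ch_block (((2 * lam)^-1) *: (M *m Jmx R n.-1 *m v)) M a v lam].
Proof.
split; first by apply: fwd; lia.
by move=> [M [v [a [lam [uM hJ hl ->]]]]]; exact: bwd.
Qed.
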